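(* Let $\Theta\subset\mathbb R^d$ and let $A:\Theta\to S^d_+(\mathbb R)$ be $L$-Lipschitz with respect to the Frobenius norm. Then for all $\beta>0$, $v\in\mathbb R^d$ and $\theta_1,\theta_2\in\Theta$, \[ \|v\|^2_{A_\beta(\theta_2)}\le\big(3+L\beta^{-1}|\theta_1-\theta_2|\big)\,\|v\|^2_{A_\beta(\theta_1)}. \]
   Context: $S^d_+(\mathbb R)$ is the set of real symmetric positive semidefinite $d\times d$ matrices. For $A\in S^d_+(\mathbb R)$ with spectral decomposition $A=\sum_{j=1}^d\lambda_j u_ju_j^T$ (orthonormal eigenvectors $u_j$) and $\beta>0$, define $A_\beta=\sum_{j=1}^d\max(\lambda_j,\beta)u_ju_j^T$ (eigenvalues below $\beta$ replaced by $\beta$). For a matrix $M\in S^d_+(\mathbb R)$ and $v\in\mathbb R^d$, $\|v\|_M=\sqrt{\langle Mv,v\rangle}$. $|\cdot|$ is the Euclidean norm. *)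

(* Defs.v *)
From HB Require Import structures.
From mathcomp Require Import all_boot all_order all_algebra.
From mathcomp Require Import boolp classical_sets reals.
Set Implicit Arguments. Unset Strict Implicit. Unset Printing Implicit Defensive.
Import Order.TTheory GRing.Theory Num.Theory.
Local Open Scope ring_scope.

Definition eucl_norm {R : realType} {d : nat} (v : 'cV[R]_d) : R :=
  Num.sqrt (\sum_(i < d) v i 0 ^+ 2).

Definition frob_norm {R : realType} {d : nat} (M : 'M[R]_d) : R :=
  Num.sqrt (\sum_(i < d) \sum_(j < d) M i j ^+ 2).

Definition inner {R : realType} {d : nat} (x y : 'cV[R]_d) : R :=
  \sum_(i < d) x i 0 * y i 0.

Definition normM {R : realType} {d : nat} (M : 'M[R]_d) (v : 'cV[R]_d) : R :=
  Num.sqrt (inner (M *m v) v).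

Definition psd {R : realType} {d : nat} (M : 'M[R]_d) : Prop :=
  M^T = M /\ forall v : 'cV[R]_d, 0 <= inner (M *m v) v.

(* M is obtained from A by a spectral decomposition A = sum_j lambda_j u_j u_j^T
   (columns u_j of U orthonormal), replacing each eigenvalue lambda_j by
   max(lambda_j, beta). *)
Definition is_Abeta {R : realType} {d : nat} (A : 'M[R]_d) (beta : R) (M : 'M[R]_d)
  : Prop :=
  exists (U : 'M[R]_d) (lam : 'I_d -> R),
    U^T *m U = 1%:M /\
    A = \sum_(j < d) lam j *: (col j U *m (col j U)^T) /\
    M = \sum_(j < d) Num.max (lam j) beta *: (col j U *m (col j U)^T).

(* A_beta: the (well-defined, by the spectral theorem) matrix above;
   chosen via classical choice. *)
Definition Abeta {R : realType} {d : nat} (A : 'M[R]_d) (beta : R) : 'M[R]_d :=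
  xget 0 [set M | is_Abeta A beta M].

(* Main.v *)
Require Import Defs.
From HB Require Import structures.
From mathcomp Require Import all_boot all_order all_algebra.
From mathcomp Require Import boolp classical_sets reals.
From mathcomp Require Import sesquilinear spectral.
From mathcomp Require Import complex.
From mathcomp Require Import ring lra.
Import Order.TTheory GRing.Theory Num.Theory.
Set Implicit Arguments. Unset Strict Implicit. Unset Printing Implicit Defensive.
Local Open Scope ring_scope.

Section P1.
Variable R : realType.

Lemma innerE d (x y : 'cV[R]_d) : inner x y = (x^T *m y) 0 0.
Proof. rewrite /inner mxE; apply: eq_bigr => i _; by rewrite mxE. Qed.

Lemma innerC d (x y : 'cV[R]_d) : inner x y = inner y x.
Proof. by rewrite /inner; apply: eq_bigr => i _; rewrite mulrC. Qed.

Lemma inner_q d (M : 'M[R]_d) v : inner (M *m v) v = (v^T *m M *m v) 0 0.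
Proof. by rewrite innerC innerE mulmxA. Qed.

Lemma sum_rank1 d (U : 'M[R]_d) (c : 'I_d -> R) :
  \sum_(j < d) c j *: (col j U *m (col j U)^T) = U *m diag_mx (\row_j c j) *m U^T.
Proof.
apply/matrixP => i k; rewrite mul_mx_diag summxE mxE; apply: eq_bigr => j _.
by rewrite !mxE big_ord1 !mxE; ring.
Qed.

Lemma q_diag d (U : 'M[R]_d) (c : 'rV_d) (v : 'cV[R]_d) :
  (v^T *m (U *m diag_mx c *m U^T) *m v) 0 0
  = \sum_j c 0 j * ((U^T *m v) j 0) ^+ 2.
Proof.
have -> : v^T *m (U *m diag_mx c *m U^T) *m v
          = (U^T *m v)^T *m diag_mx c *m (U^T *m v).
  by rewrite trmx_mul trmxK !mulmxA.
rewrite mul_mx_diag mxE; apply: eq_bigr => j _; rewrite !mxE; ring.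
Qed.

Lemma sumsq_orth d (U : 'M[R]_d) (v : 'cV[R]_d) : U^T *m U = 1%:M ->
  \sum_j ((U^T *m v) j 0) ^+ 2 = \sum_i (v i 0) ^+ 2.
Proof.
move=> HU; have := q_diag U (const_mx 1) v.
rewrite diag_const_mx mulmx1 (mulmx1C HU) mulmx1 => E.
transitivity (\sum_j (const_mx 1 : 'rV[R]_d) 0 j * ((U^T *m v) j 0) ^+ 2).
  by apply: eq_bigr => j _; rewrite !mxE mul1r.
rewrite -E mxE; apply: eq_bigr => i _; rewrite mxE expr2.
by [].
Qed.

Lemma diag_coef d (U : 'M[R]_d) (c : 'rV_d) k : U^T *m U = 1%:M ->
  ((U *m col k 1%:M)^T *m (U *m diag_mx c *m U^T) *m (U *m col k 1%:M)) 0 0 = c 0 k.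
Proof.
move=> HU; rewrite q_diag mulmxA HU mul1mx (bigD1 k) //= big1 ?addr0.
  by rewrite !mxE eqxx expr1n mulr1.
by move=> j /negbTE jk; rewrite !mxE jk expr0n /= mulr0.
Qed.

Lemma CS (I : finType) (x y : I -> R) :
  `|\sum_i x i * y i| <= Num.sqrt (\sum_i x i ^+ 2) * Num.sqrt (\sum_i y i ^+ 2).
Proof.
have X0 : 0 <= \sum_i x i ^+ 2 by apply: sumr_ge0 => i _; exact: sqr_ge0.
have Y0 : 0 <= \sum_i y i ^+ 2 by apply: sumr_ge0 => i _; exact: sqr_ge0.
suff H : (\sum_i x i * y i) ^+ 2 <= (\sum_i x i ^+ 2) * (\sum_i y i ^+ 2).
  by rewrite -sqrtrM // -sqrtr_sqr; apply: ler_wsqrtr.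
have E : \sum_i ((\sum_i y i ^+ 2) * x i - (\sum_i x i * y i) * y i) ^+ 2
   = (\sum_i y i ^+ 2) * ((\sum_i x i ^+ 2) * (\sum_i y i ^+ 2) - (\sum_i x i * y i) ^+ 2).
  transitivity (\sum_i ((\sum_i y i ^+ 2) ^+ 2 * x i ^+ 2
       + (- (2 * (\sum_i y i ^+ 2) * (\sum_i x i * y i))) * (x i * y i)
       + (\sum_i x i * y i) ^+ 2 * y i ^+ 2)).
    by apply: eq_bigr => i _; ring.
  rewrite !big_split /= -!mulr_sumr; ring.
have [Yz|Ynz] := eqVneq (\sum_i y i ^+ 2) 0.
  have yz : forall i, y i = 0.
    move=> i; apply/eqP; rewrite -sqrf_eq0; apply/eqP.
    by apply: (psumr_eq0P _ Yz) => // j _; exact: sqr_ge0.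
  by rewrite Yz big1 ?expr0n ?mulr0 // => i _; rewrite yz mulr0.
have Ygt : 0 < \sum_i y i ^+ 2 by rewrite lt_def Ynz Y0.
rewrite -subr_ge0 -(pmulr_rge0 _ Ygt) -E.
by apply: sumr_ge0 => i _; exact: sqr_ge0.
Qed.

End P1.

Section P3.
Variable R : realType.
Local Notation C := (R[i]).
Local Notation CRe := (@complex.Re R).
Local Notation CIm := (@complex.Im R).

Lemma Re_sum (I : Type) (r : seq I) (F : I -> C) : CRe (\sum_(i <- r) F i) = \sum_(i <- r) CRe (F i).
Proof.
elim: r => [|a r IH]; first by rewrite !big_nil.
by rewrite !big_cons -IH; case: (F a) => [? ?]; case: (\sum_(i <- r) F i).
Qed.

Lemma Im_sum (I : Type) (r : seq I) (F : I -> C) : CIm (\sum_(i <- r) F i) = \sum_(i <- r) CIm (F i).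
Proof.
elim: r => [|a r IH]; first by rewrite !big_nil.
by rewrite !big_cons -IH; case: (F a) => [? ?]; case: (\sum_(i <- r) F i).
Qed.

Lemma ReM (z w : C) : CRe (z * w) = CRe z * CRe w - CIm z * CIm w.
Proof. by case: z => a b; case: w => c e. Qed.

Lemma ImM (z w : C) : CIm (z * w) = CRe z * CIm w + CIm z * CRe w.
Proof. by case: z => a b; case: w => c e. Qed.

Lemma real_eig n (A : 'M[R]_n.+1) : A^T = A ->
  exists (x : 'rV[R]_n.+1) (l : R), x != 0 /\ x *m A = l *: x.
Proof.
move=> sA.
pose Ac : 'M[C]_n.+1 := map_mx (real_complex R) A.
have Ah : Ac \is hermsymmx.
  apply: realsym_hermsym.
    apply/is_hermitianmxP; rewrite expr0 scale1r.
    by apply/matrixP => i j; rewrite !mxE -{1}sA mxE.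
  apply/mxOverP => i j; rewrite mxE realE.
  have [h|h] := lerP 0 (A i j); first by rewrite ler0c h.
  by rewrite -[0 : C]/((0:R)%:C)%C !lecR (ltW h) orbT.
have Ds := hermitian_spectral_diag_real Ah.
have /orthomx_spectralP EA := hermitian_normalmx Ah.
set P := spectralmx Ac in EA.
set D := spectral_diag Ac in EA Ds.
have Pu : P \in unitmx by exact: spectral_unit.
have EP : P *m Ac = diag_mx D *m P.
  by rewrite {1}EA !mulmxA mulmxV // mul1mx.
pose p := row 0 P.
have Ep : p *m Ac = D 0 0 *: p.
  by rewrite /p -row_mul EP; apply/rowP => k; rewrite mul_diag_mx !mxE.
have pnz : p != 0.
  apply/eqP => p0; have := mulmxV Pu; move/(congr1 (row 0)).
  rewrite row_mul -/p p0 mul0mx => /rowP/(_ 0); rewrite !mxE eqxx /=.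
  by move=> /esym/eqP; rewrite oner_eq0.
have : ~~ [forall k, p 0 k == 0].
  apply: contra pnz => /forallP H; apply/eqP/rowP => k; rewrite [RHS]mxE; apply/eqP; exact: H.
rewrite negb_forall => /existsP [k pk].
have ImD : CIm (D 0 0) = 0.
  have := mxOverP Ds 0 0; rewrite realE !lecE /=.
  by case/orP => /andP [/eqP -> _].
have Ek : forall k, \sum_j p 0 j * (A j k)%:C%C = D 0 0 * p 0 k.
  move=> k'; have := Ep; move/rowP/(_ k'); rewrite !mxE /= => <-.
  by apply: eq_bigr => j _; rewrite /Ac !mxE.
have ReE : (\row_j CRe (p 0 j)) *m A = CRe (D 0 0) *: \row_j CRe (p 0 j).
  apply/rowP => k'; rewrite !mxE.
  have := congr1 CRe (Ek k'); rewrite Re_sum ReM ImD mul0r subr0  !mxE => <-.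
  by apply: eq_bigr => j _; rewrite !mxE ReM /= mulr0 subr0.
have ImE : (\row_j CIm (p 0 j)) *m A = CRe (D 0 0) *: \row_j CIm (p 0 j).
  apply/rowP => k'; rewrite !mxE.
  have := congr1 CIm (Ek k'); rewrite Im_sum ImM ImD mul0r addr0 !mxE => <-.
  by apply: eq_bigr => j _; rewrite !mxE ImM /= mulr0 add0r.
have pk' : P 0 k != 0 by move: pk; rewrite mxE.
have [hr|hr] := eqVneq (CRe (P 0 k)) 0.
  exists (\row_j CIm (p 0 j)), (CRe (D 0 0)); split => //.
  apply/eqP => /rowP/(_ k); rewrite !mxE => him.
  apply: (negP pk'); move: hr him; case: (P 0 k) => a b /= -> ->.
  by [].
exists (\row_j CRe (p 0 j)), (CRe (D 0 0)); split => //.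
by apply/eqP => /rowP/(_ k); rewrite !mxE; apply/eqP.
Qed.

End P3.

Section P4.
Variable R : realType.

Lemma tr11 (X : 'M[R]_1) : X^T = X.
Proof. by apply/matrixP => i j; rewrite !ord1 mxE. Qed.

Lemma householder n (u : 'rV[R]_n.+1) : u *m u^T = 1%:M ->
  exists V : 'M[R]_n.+1, V *m V^T = 1%:M /\ row 0 V = u.
Proof.
move=> uu.
pose e : 'rV[R]_n.+1 := delta_mx 0 0.
have [ue|une] := eqVneq u e.
  by exists 1%:M; rewrite trmx1 mulmx1 row1 ue.
pose w := e - u.
pose s := (w *m w^T) 0 0.
have ee : e *m e^T = 1%:M by rewrite /e trmx_delta mul_delta_mx; apply/matrixP => i j; rewrite !ord1 !mxE.
pose t := (e *m u^T) 0 0.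
have ue' : (u *m e^T) 0 0 = t by rewrite -[u *m e^T]tr11 trmx_mul trmxK.
have sE : s = 2 - 2 * t.
  rewrite /s /w linearB /= mulmxBl !mulmxBr ee uu.
  have -> : forall X Y : 'M[R]_1, (1%:M - X - (Y - 1%:M)) 0 0 = 2 - X 0 0 - Y 0 0.
    by move=> X Y; rewrite !mxE eqxx /=; ring.
  rewrite ue' -/t; ring.
have ewE : (e *m w^T) 0 0 = 1 - t.
  rewrite /w linearB /= mulmxBr ee.
  have -> : forall X : 'M[R]_1, (1%:M - X) 0 0 = 1 - X 0 0 by move=> X; rewrite !mxE eqxx.
  by [].
have s0 : s != 0.
  apply: contraNneq une => s0.
  have : s = \sum_k (w 0 k) ^+ 2 by rewrite /s mxE; apply: eq_bigr => k _; rewrite [w^T k 0]mxE expr2.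
  rewrite s0 => /esym H.
  apply/eqP/rowP => j.
  have := psumr_eq0P (fun k _ => sqr_ge0 (w 0 k)) H (i := j) isT.
  by move/eqP; rewrite sqrf_eq0 /w !mxE subr_eq0 => /eqP ->.
pose c := 2 / s.
pose W := w^T *m w.
pose V := 1%:M - c *: W.
have WT : W^T = W by rewrite /W trmx_mul trmxK.
have WW : W *m W = s *: W.
  by rewrite /W mulmxA -(mulmxA w^T) [w *m w^T]mx11_scalar -/s mul_mx_scalar scalemxAl.
have VT : V^T = V by rewrite /V linearB /= linearZ /= trmx1 WT.
exists V; split.
  rewrite VT /V mulmxBl !mulmxBr mul1mx mulmx1 -!scalemxAl -!scalemxAr WW scalerA.
  have cs : c * s = 2 by rewrite /c mulfVK.
  rewrite mul1mx scalerA -mulrA cs.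
  apply/matrixP => i j; rewrite !mxE; ring.
rewrite rowE -/e /V mulmxBr mulmx1 -scalemxAr /W mulmxA [e *m w^T]mx11_scalar ewE.
rewrite mul_scalar_mx scalerA.
have -> : c * (1 - t) = 1 :> R.
  have st : s = 2 * (1 - t) by rewrite sE; ring.
  by rewrite /c st invfM mulrA mulfV ?mul1r ?mulVf // -?st // ; move: s0; rewrite st mulf_eq0 negb_or => /andP [].
by rewrite scale1r /w opprB addrC subrK.
Qed.

End P4.

Section P5.
Variable R : realType.

Lemma spectral_real d (A : 'M[R]_d) : A^T = A ->
  exists (U : 'M[R]_d) (c : 'rV[R]_d), U^T *m U = 1%:M /\ A = U *m diag_mx c *m U^T.
Proof.
elim: d A => [|n IH] A sA.
  exists 1%:M, 0; split; first by rewrite trmx1 mulmx1.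
  by rewrite [A]flatmx0 [RHS]flatmx0.
have [x [l [xnz xA]]] := real_eig sA.
pose N := (x *m x^T) 0 0.
have NE : N = \sum_k (x 0 k) ^+ 2 by rewrite /N mxE; apply: eq_bigr => k _; rewrite [x^T k 0]mxE expr2.
have Ngt : 0 < N.
  rewrite lt_def; apply/andP; split; last by rewrite NE; apply: sumr_ge0 => k _; exact: sqr_ge0.
  apply: contra xnz; rewrite NE => /eqP H; apply/eqP/rowP => j.
  have := psumr_eq0P (fun k _ => sqr_ge0 (x 0 k)) H (i := j) isT.
  by move/eqP; rewrite sqrf_eq0 mxE => /eqP.
pose u := (Num.sqrt N)^-1 *: x.
have sN : 0 < Num.sqrt N by rewrite sqrtr_gt0.
have uu : u *m u^T = 1%:M.
  rewrite /u linearZ /= -scalemxAl -scalemxAr scalerA [x *m x^T]mx11_scalar -/N.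
  rewrite -invfM -expr2 sqr_sqrtr ?ltW // scale_scalar_mx mulVf //.
  by rewrite gt_eqF.
have uA : u *m A = l *: u by rewrite /u -scalemxAl xA !scalerA mulrC.
have [V [VV rV]] := householder uu.
have VV' : V^T *m V = 1%:M by exact: mulmx1C.
have [B defB] : exists B : 'M[R]_(1 + n), B = V *m A *m V^T by eexists.
have sB : B^T = B by rewrite defB !trmx_mul trmxK sA mulmxA.
have rowB : forall k, B 0 k = l * (0 == k)%:R.
  move=> k; have : row 0 B = l *: row 0 1%:M.
    by rewrite defB !row_mul rV uA -scalemxAl -rV -row_mul VV.
  by move/rowP/(_ k); rewrite !mxE.
pose C := drsubmx B.
have l0 : lshift n (0 : 'I_1) = 0 by apply: val_inj.
have rne : forall j : 'I_n, ((0 : 'I_(1 + n)) == rshift 1 j) = false.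
  by move=> j; apply/negbTE; rewrite -val_eqE.
have EB : B = block_mx (l%:M : 'M_1) 0 0 C.
  rewrite -{1}[B]submxK; congr block_mx.
  - by apply/matrixP => i j; rewrite !ord1 !mxE l0 rowB !eqxx mulr1.
  - by apply/matrixP => i j; rewrite !ord1 !mxE l0 rowB rne mulr0.
  - apply/matrixP => i j; rewrite !ord1 !mxE l0.
    by rewrite -[in LHS]sB mxE rowB rne mulr0.
have sC : C^T = C.
  by apply/matrixP => i j; rewrite !mxE -[in LHS]sB mxE.
have [W [c [WW EC]]] := IH C sC.
have tB : (block_mx (1%:M : 'M[R]_1) 0 0 W)^T = block_mx (1%:M : 'M[R]_1) 0 0 W^T.
  by rewrite tr_block_mx trmx1 !trmx0.
exists (V^T *m block_mx (1%:M : 'M[R]_1) 0 0 W), (row_mx (const_mx l : 'rV[R]_1) c).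
split.
  rewrite trmx_mul trmxK tB mulmxA -(mulmxA _ V) VV mulmx1.
  rewrite (@mulmx_block _ 1 n 1 n 1 n) !mul0mx !mulmx0 !mul1mx !addr0 !add0r WW.
  by rewrite [RHS](scalar_mx_block 1 n).
have EM : block_mx (1%:M : 'M[R]_1) 0 0 W *m block_mx (l%:M : 'M_1) 0 0 (diag_mx c)
          *m block_mx (1%:M : 'M[R]_1) 0 0 W^T = B.
  rewrite !(@mulmx_block _ 1 n 1 n 1 n) !mul0mx !mulmx0 !mul1mx !mulmx1 !addr0 !add0r.
  by rewrite mul0mx EB EC.
transitivity (V^T *m B *m V).
  by rewrite defB !mulmxA VV' mul1mx -mulmxA VV' mulmx1.
rewrite -EM (@diag_mx_row _ n 1) diag_const_mx trmx_mul trmxK tB.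
by rewrite !mulmxA.
Qed.

End P5.

Section P2.
Variable R : realType.



Lemma Abeta_ex d (A : 'M[R]_d) beta : A^T = A -> is_Abeta A beta (Abeta A beta).
Proof.
move=> sA; rewrite /Abeta; apply: (xgetPex 0 (P := [set M | is_Abeta A beta M])).
have [U [c [HU EA]]] := spectral_real sA.
exists (\sum_(j < d) Num.max (c 0 j) beta *: (col j U *m (col j U)^T)).
exists U, (fun j => c 0 j); split => //; split => //.
rewrite sum_rank1 {1}EA; do 3 f_equal.
by apply/rowP => j; rewrite mxE.
Qed.

Lemma Abeta_props d (A M : 'M[R]_d) beta (v : 'cV[R]_d) : psd A -> 0 < beta ->
  is_Abeta A beta M ->
  [/\ beta * (\sum_i (v i 0) ^+ 2) <= (v^T *m M *m v) 0 0,
      (v^T *m A *m v) 0 0 <= (v^T *m M *m v) 0 0 &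
      (v^T *m M *m v) 0 0 <= (v^T *m A *m v) 0 0 + beta * (\sum_i (v i 0) ^+ 2)].
Proof.
move=> [_ pA] bgt [U [lam [HU [EA EM]]]].
have lam0 : forall j, 0 <= lam j.
  move=> j; have := pA (U *m col j 1%:M).
  by rewrite inner_q EA sum_rank1 diag_coef // mxE.
rewrite EM EA !sum_rank1 !q_diag -(sumsq_orth v HU) mulr_sumr.
split.
- apply: ler_sum => j _; apply: ler_wpM2r; first exact: sqr_ge0.
  by rewrite mxE le_max lexx orbT.
- apply: ler_sum => j _; apply: ler_wpM2r; first exact: sqr_ge0.
  by rewrite !mxE le_max lexx.
- rewrite -big_split /=; apply: ler_sum => j _; rewrite -mulrDl.
  apply: ler_wpM2r; first exact: sqr_ge0.
  rewrite !mxE ge_max; apply/andP; split.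
    by rewrite lerDl ltW.
  by rewrite lerDr.
Qed.

Lemma quad_diff_bound d (A1 A2 : 'M[R]_d) (v : 'cV[R]_d) :
  (v^T *m A2 *m v) 0 0 - (v^T *m A1 *m v) 0 0
   <= frob_norm (A1 - A2) * (\sum_i (v i 0) ^+ 2).
Proof.
have qE : forall D : 'M[R]_d, (v^T *m D *m v) 0 0
    = \sum_p (D p.2 p.1 * (v p.2 0 * v p.1 0)).
  move=> D; rewrite -(pair_big xpredT xpredT (fun j i => D i j * (v i 0 * v j 0))) /=.
  rewrite mxE; apply: eq_bigr => j _; rewrite mxE mulr_suml; apply: eq_bigr => i _.
  by rewrite !mxE; ring.
have -> : (v^T *m A2 *m v) 0 0 - (v^T *m A1 *m v) 0 0 = - (v^T *m (A1 - A2) *m v) 0 0.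
  by rewrite mulmxBr mulmxBl !mxE opprB.
apply: (le_trans (ler_norm _)); rewrite normrN.
rewrite qE; apply: (le_trans (CS _ _)).
have N0 : 0 <= \sum_i (v i 0) ^+ 2 by apply: sumr_ge0 => i _; exact: sqr_ge0.
apply: ler_pM.
- exact: sqrtr_ge0.
- exact: sqrtr_ge0.
- rewrite /frob_norm le_eqVlt; apply/orP; left; apply/eqP; congr Num.sqrt.
  rewrite -(pair_big xpredT xpredT (fun j i => (A1 - A2) i j ^+ 2)) /=.
  exact: exchange_big.
- rewrite -(pair_big xpredT xpredT (fun j i => (v i 0 * v j 0) ^+ 2)) /=.
  have -> : \sum_j \sum_i (v i 0 * v j 0) ^+ 2 = (\sum_i (v i 0) ^+ 2) ^+ 2.
    rewrite expr2 mulr_suml; apply: eq_bigr => j _; rewrite mulr_sumr.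
    by apply: eq_bigr => i _; rewrite exprMn mulrC.
  by rewrite sqrtr_sqr ger0_norm.
Qed.

End P2.
Local Open Scope classical_set_scope.

Theorem mainTheorem3 (R : realType) (d : nat) (Theta : set 'cV[R]_d)
    (A : 'cV[R]_d -> 'M[R]_d) (L : R)
    (hpsd : forall theta, theta \in Theta -> psd (A theta))
    (hLip : forall theta1 theta2, theta1 \in Theta -> theta2 \in Theta ->
       frob_norm (A theta1 - A theta2) <= L * eucl_norm (theta1 - theta2)) :
  forall (beta : R) (v : 'cV[R]_d) (theta1 theta2 : 'cV[R]_d),
    0 < beta -> theta1 \in Theta -> theta2 \in Theta ->
    normM (Abeta (A theta2) beta) v ^+ 2
      <= (3 + L * beta^-1 * eucl_norm (theta1 - theta2))
         * normM (Abeta (A theta1) beta) v ^+ 2.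
Proof.
move=> beta v t1 t2 bgt h1 h2.
have P1 := hpsd t1 h1; have P2 := hpsd t2 h2.
have E1 := Abeta_ex beta P1.1; have E2 := Abeta_ex beta P2.1.
have [a1 b1 c1] := Abeta_props v P1 bgt E1.
have [a2 b2 c2] := Abeta_props v P2 bgt E2.
have Dq := quad_diff_bound (A t1) (A t2) v.
have Lip := hLip t1 t2 h1 h2.
have N0 : 0 <= \sum_i (v i 0) ^+ 2 by apply: sumr_ge0 => i _; exact: sqr_ge0.
have F0 : 0 <= frob_norm (A t1 - A t2) by exact: sqrtr_ge0.
have K0 : 0 <= L * eucl_norm (t1 - t2) by exact: le_trans Lip.
have q10 : 0 <= (v^T *m Abeta (A t1) beta *m v) 0 0.
  by apply: le_trans a1; rewrite mulr_ge0 // ltW.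
have q20 : 0 <= (v^T *m Abeta (A t2) beta *m v) 0 0.
  by apply: le_trans a2; rewrite mulr_ge0 // ltW.
rewrite /normM !inner_q !sqr_sqrtr //.
move: a1 b1 c1 a2 b2 c2 Dq Lip N0 F0 K0 q10 q20.
set q1 := (v^T *m Abeta (A t1) beta *m v) 0 0.
set q2 := (v^T *m Abeta (A t2) beta *m v) 0 0.
set r1 := (v^T *m A t1 *m v) 0 0.
set r2 := (v^T *m A t2 *m v) 0 0.
set N := \sum_i (v i 0) ^+ 2.
set F := frob_norm (A t1 - A t2).
set e := eucl_norm (t1 - t2).
move=> a1 b1 c1 a2 b2 c2 Dq Lip N0 F0 K0 q10 q20.
have FN : F * N <= (L * e) * N by apply: ler_wpM2r.
have NB : N <= beta^-1 * q1.
  by rewrite -(ler_pM2l bgt) mulrA mulfV ?mul1r // gt_eqF.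
have KN : (L * e) * N <= (L * e) * (beta^-1 * q1) by apply: ler_wpM2l.
have -> : (3 + L * beta^-1 * e) * q1 = 3 * q1 + (L * e) * (beta^-1 * q1) by ring.
lra.
Qed.
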